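(* There exist constants $C>0$, $\delta_0\in(0,\tfrac18)$ and $\epsilon_0>0$ such that the following holds for all integers $n\ge2$ and $m\ge1$, every $\epsilon\in(0,\epsilon_0)$, and every forecasting competition mechanism $M$: if for every belief matrix $P\in[0,1]^{n\times m}$ and every ground truth $\vec\theta\in[0,1]^m$, with truthful reports $R=P$, the forecaster $i\sim M(P,\vec y)$ (with $\vec y\sim\vec\theta$) is $\epsilon$-optimal with probability at least $1-\delta_0$, then $m\ge\frac{C\ln n}{\epsilon^2}$. That is, the nonstrategic event complexity of every mechanism is $\Omega(\log(n)/\epsilon^2)$.
   Context: A forecasting competition mechanism is a map $M:[0,1]^{n\times m}\times\{0,1\}^m\to\Delta_n$ (reports and realized outcomes to a distribution over the $n$ forecasters). Events are independent with $\Pr[y_t=1]=\theta_t$. Accuracy of forecaster $i$ with beliefs $p_i$: $a_i=1-\frac1m\sum_t(p_{it}-\theta_t)^2$; $i$ is $\epsilon$-optimal if $a_i\ge\max_ja_j-\epsilon$. *)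

(* Defs.v *)
From HB Require Import structures.
From mathcomp Require Import all_boot all_order all_algebra.
From mathcomp Require Import all_classical all_reals all_analysis.
Set Implicit Arguments. Unset Strict Implicit. Unset Printing Implicit Defensive.
Import Order.TTheory GRing.Theory Num.Theory.
Local Open Scope ring_scope.

Section Forecast.
Variable R : realType.

(* A mechanism maps a report matrix (n forecasters x m events) and realized
   outcomes y in {0,1}^m to a vector of weights over the n forecasters. *)
Definition mechanism (n m : nat) :=
  'M[R]_(n, m) -> {ffun 'I_m -> bool} -> {ffun 'I_n -> R}.

Definition in01 (x : R) : bool := (0 <= x) && (x <= 1).

Definition matrix01 n m (P : 'M[R]_(n, m)) : Prop := forall i j, in01 (P i j).
Definition vec01 m (theta : 'I_m -> R) : Prop := forall t, in01 (theta t).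

Definition is_mechanism n m (M : mechanism n m) : Prop :=
  forall P y, matrix01 P ->
    (forall i, 0 <= M P y i) /\ \sum_(i < n) M P y i = 1.

Definition accuracy n m (P : 'M[R]_(n, m)) (theta : 'I_m -> R) (i : 'I_n) : R :=
  1 - (m%:R)^-1 * \sum_(t < m) (P i t - theta t) ^+ 2.

Definition eps_optimal n m (P : 'M[R]_(n, m)) (theta : 'I_m -> R) (eps : R)
  (i : 'I_n) : bool :=
  [forall j : 'I_n, accuracy P theta j - eps <= accuracy P theta i].

Definition outcome_prob m (theta : 'I_m -> R) (y : {ffun 'I_m -> bool}) : R :=
  \prod_(t < m) (if y t then theta t else 1 - theta t).

(* Pr_{y ~ theta, i ~ M(P, y)} [ i is eps-optimal ] with truthful reports R = P *)
Definition success_prob n m (M : mechanism n m) (P : 'M[R]_(n, m))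
  (theta : 'I_m -> R) (eps : R) : R :=
  \sum_(y : {ffun 'I_m -> bool})
    outcome_prob theta y * \sum_(i < n | eps_optimal P theta eps i) M P y i.

End Forecast.

(* Main.v *)
Require Import Defs.
From HB Require Import structures.
From mathcomp Require Import all_boot all_order all_algebra.
From mathcomp Require Import all_classical all_reals all_analysis.
Import Order.TTheory GRing.Theory Num.Theory.
Local Open Scope ring_scope.
From mathcomp Require Import ring lra.
Set Warnings "-all".

Lemma outcome_sum1 (R : realType) m (th : 'I_m -> R) :
  \sum_y outcome_prob th y = 1.
Proof.
rewrite /outcome_prob.
rewrite -(bigA_distr_bigA (fun t (b : bool) => if b then th t else 1 - th t)) /=.
rewrite (eq_bigr (fun _ => 1)) ?prodr_const ?expr1n // => t _.
by rewrite big_bool /= addrC subrK.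
Qed.

Lemma outcome_ge0 (R : realType) m (th : 'I_m -> R) y :
  vec01 th -> 0 <= outcome_prob th y.
Proof.
move=> h; rewrite /outcome_prob; apply: prodr_ge0 => t _.
by case: (y t); move: (h t) => /andP[h0 h1] //; rewrite subr_ge0.
Qed.

Lemma chi_prod (R : realType) m (th th' : 'I_m -> R) :
  (forall t, 0 < th' t < 1) ->
  \sum_y outcome_prob th y ^+ 2 / outcome_prob th' y =
  \prod_t (th t ^+ 2 / th' t + (1 - th t) ^+ 2 / (1 - th' t)).
Proof.
move=> h.
transitivity (\prod_t \sum_(b : bool)
   (if b then th t ^+ 2 / th' t else (1 - th t) ^+ 2 / (1 - th' t))); last first.
  by apply: eq_bigr => t _; rewrite big_bool.
rewrite bigA_distr_bigA /=; apply: eq_bigr => y _.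
rewrite /outcome_prob -prodrXl -prodf_div; apply: eq_bigr => t _.
by case: (y t).
Qed.

Lemma l1_term (R : realType) (a b : R) : 0 < b ->
  `|a - b| <= 3/2 * (a ^+ 2 / b - 2 * a + b) + 1/6 * b.
Proof.
move=> hb.
have hb0 : b != 0 by rewrite gt_eqF.
set u := a ^+ 2 / b.
have hu : u * b = a ^+ 2 by rewrite /u mulfVK.
rewrite -subr_ge0.
have : 0 <= b * (3/2 * (u - 2 * a + b) + 1/6 * b - `|a - b|).
  have [h|h] := lerP 0 (a - b).
    rewrite (ger0_norm h).
    have e : b * (3/2 * (u - 2 * a + b) + 1/6 * b - (a - b)) = 3/2 * (u*b) - 3 * a * b + 5/3 * b^+2 - a*b + b^+2.
      by rewrite /GRing.exp /=; field.
    rewrite e hu; have := sqr_ge0 (a - 4/3*b); nra.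
  rewrite (ltr0_norm h).
  have e : b * (3/2 * (u - 2 * a + b) + 1/6 * b + (a - b)) = 3/2 * (u*b) - 3 * a * b + 5/3 * b^+2 + a*b - b^+2.
    by rewrite /GRing.exp /=; field.
  rewrite opprK e hu; have := sqr_ge0 (a - 2/3*b); nra.
by rewrite pmulr_rge0.
Qed.

Lemma l1_bound (R : realType) (T : finType) (f g : T -> R) :
  (forall x, 0 < g x) ->
  \sum_x `|f x - g x| <=
  3/2 * (\sum_x f x ^+ 2 / g x - 2 * \sum_x f x + \sum_x g x) + 1/6 * \sum_x g x.
Proof.
move=> hg.
have H : \sum_x `|f x - g x| <= \sum_x (3/2 * (f x ^+ 2 / g x - 2 * f x + g x) + 1/6 * g x).
  by apply: ler_sum => x _; exact: l1_term.
apply: le_trans H _.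
rewrite big_split /= -!mulr_sumr big_split /= sumrB -mulr_sumr.
by [].
Qed.

Lemma pow_bound (R : realType) (x : R) N : 0 <= x ->
  (1 + x) ^+ N * (1 - N%:R * x) <= 1.
Proof.
move=> hx; elim: N => [|N IH]; first by rewrite expr0 mul0r subr0 mulr1.
have hp : 0 <= (1 + x) ^+ N by apply: exprn_ge0; lra.
rewrite exprS -mulrA mulrC -mulrA.
apply: le_trans IH.

apply: ler_wpM2l => //.
rewrite -natr1.
have hy : 0 <= (N%:R : R) by [].
set y := (N%:R : R) in hy *.
nra.
Qed.

Lemma aux_pu (R : realType) (p u : R) : 0 <= p -> 0 <= u -> u <= 1/2 ->
  p * (1 - u) <= 1 -> p <= 1 + 2 * u.
Proof.
move=> hp hu hu2 h.
have h3 : 0 <= u * (1/2 - u) by apply: mulr_ge0 => //; lra.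
have h4 : 0 <= p * u by apply: mulr_ge0.
nra.
Qed.

Lemma pow_bound2 (R : realType) (x : R) N : 0 <= x -> N%:R * x <= 1/2 ->
  (1 + x) ^+ N <= 1 + 2 * (N%:R * x).
Proof.
move=> hx hu.
apply: aux_pu => //; last exact: pow_bound.
  by apply: exprn_ge0; lra.
by apply: mulr_ge0.
Qed.

Definition gblk k m (t : 'I_m) : 'I_k.+1 := Ordinal (ltn_pmod t (ltn0Sn k)).
Definition pat k n (i : 'I_n) : {ffun 'I_k.+1 -> bool} :=
  nth [ffun => false] (enum {ffun 'I_k.+1 -> bool}) i.
Arguments gblk k {m} t.
Arguments pat k {n} i.
Definition Pm (R : realType) k n m : 'M[R]_(n, m) :=
  \matrix_(i, t) (if pat k i (gblk k t) then 1 else 0).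
Definition thv (R : realType) k m (s : R) (sg : {ffun 'I_k.+1 -> bool}) : 'I_m -> R :=
  fun t => if sg (gblk k t) then 1/2 + s else 1/2 - s.
Definition Ind (R : realType) k n m (sg : {ffun 'I_k.+1 -> bool}) (i : 'I_n) (t : 'I_m) : R :=
  if pat k i (gblk k t) == sg (gblk k t) then 1 else 0.
Arguments thv {R k m} s sg t.
Arguments Ind R {k n m} sg i t.

Lemma acc_formula (R : realType) k n m (s : R) (sg : {ffun 'I_k.+1 -> bool}) (i : 'I_n) : (0 < m)%N ->
  accuracy (Pm R k n m) (@thv R k m s sg) i =
  1 - (1/2 - s) ^+ 2 - 2 * s + 2 * s / m%:R * \sum_(t < m) Ind R sg i t.
Proof.
move=> hm.
have hm0 : (m%:R : R) != 0 by rewrite pnatr_eq0 -lt0n.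
rewrite /accuracy.
rewrite (eq_bigr (fun t : 'I_m => (1/2 - s) ^+ 2 + 2 * s - 2 * s * Ind R sg i t)); last first.
  move=> t _; rewrite /Pm /thv /Ind mxE.
  by case: (pat k i (gblk k t)); case: (sg (gblk k t)) => /=;
    field.
rewrite big_split /= sumrN sumr_const card_ord -mulr_sumr.
rewrite -[X in X *+ m]mulr1 -mulrnAr.
by field.
Qed.

Lemma pat_surj k n (hn : (2 ^ k.+1 <= n)%N) (sg : {ffun 'I_k.+1 -> bool}) :
  exists i0 : 'I_n, pat k i0 = sg.
Proof.
have hi : (index sg (enum {ffun 'I_k.+1 -> bool}) < n)%N.
  apply: leq_trans hn.
  have -> : (2 ^ k.+1)%N = size (enum {ffun 'I_k.+1 -> bool}).
    by rewrite -cardT card_ffun card_bool card_ord.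
  by rewrite index_mem mem_enum.
exists (Ordinal hi); by rewrite /pat /= nth_index // mem_enum.
Qed.

Lemma match_full (R : realType) k n m (sg : {ffun 'I_k.+1 -> bool}) (i : 'I_n) :
  pat k i = sg -> \sum_(t < m) Ind R sg i t = m%:R.
Proof.
move=> h; rewrite (eq_bigr (fun _ => 1)) ?sumr_const ?card_ord //.
by move=> t _; rewrite /Ind h eqxx.
Qed.

Lemma epsopt_match (R : realType) k n m (eps : R) (sg : {ffun 'I_k.+1 -> bool}) (i : 'I_n) :
  (0 < m)%N -> (2 ^ k.+1 <= n)%N -> 0 < eps ->
  eps_optimal (Pm R k n m) (@thv R k m (2 * eps) sg) eps i ->
  3/4 * m%:R <= \sum_(t < m) Ind R sg i t.
Proof.
move=> hm hn he /forallP h.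
have [i0 hi0] := @pat_surj k n hn sg.
have := h i0; rewrite !acc_formula // (@match_full R k n m sg i0 hi0).
have hm0 : (m%:R : R) != 0 by rewrite pnatr_eq0 -lt0n.
have hmp : (0 : R) < m%:R by rewrite ltr0n.
set S := \sum_(t < m) Ind R sg i t.
have e1 : 2 * (2 * eps) / m%:R * m%:R = 4 * eps by rewrite mulfVK //; ring.
set u := S / m%:R.
have e2 : 2 * (2 * eps) / m%:R * S = 4 * eps * u by rewrite /u; field.
have e3 : u * m%:R = S by rewrite /u mulfVK.
rewrite e1 e2 => H.
have hu : 3/4 <= u by nra.
rewrite -e3; nra.
Qed.

Lemma Pm01 (R : realType) k n m : matrix01 (Pm R k n m).
Proof. by move=> i t; rewrite /in01 /Pm mxE; case: ifP => _; rewrite ?ler01 ?lexx. Qed.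

Lemma thv01 (R : realType) k m (eps : R) sg : 0 <= eps <= 1/4 ->
  vec01 (@thv R k m (2 * eps) sg).
Proof.
move=> /andP[h0 h1] t; rewrite /in01 /thv; case: ifP => _; apply/andP; split; lra.
Qed.

Lemma Ind_ge0 (R : realType) k n m sg (i : 'I_n) (t : 'I_m) : 0 <= @Ind R k n m sg i t.
Proof. by rewrite /Ind; case: ifP. Qed.

Lemma Ind_le1 (R : realType) k n m sg (i : 'I_n) (t : 'I_m) : @Ind R k n m sg i t <= 1.
Proof. by rewrite /Ind; case: ifP => _; rewrite ?ler01. Qed.

Lemma stepB (R : realType) k n m (eps delta : R) (M : mechanism R n m) sg :
  is_mechanism M -> (0 < m)%N -> (2 ^ k.+1 <= n)%N -> 0 < eps -> eps <= 1/4 ->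
  delta <= 1 ->
  1 - delta <= success_prob M (Pm R k n m) (@thv R k m (2 * eps) sg) eps ->
  3/4 * m%:R * (1 - delta) <=
  \sum_y outcome_prob (@thv R k m (2 * eps) sg) y *
     \sum_(i < n) M (Pm R k n m) y i * \sum_(t < m) Ind R sg i t.
Proof.
move=> hM hm hn he he4 hd hs.
have hm0 : (0 : R) <= 3/4 * m%:R by apply: mulr_ge0 => //; lra.
have hth : vec01 (@thv R k m (2 * eps) sg) by apply: thv01; apply/andP; split => //; lra.
apply: le_trans (ler_wpM2l hm0 hs) _.
rewrite /success_prob mulr_sumr; apply: ler_sum => y _.
rewrite mulrCA; apply: ler_wpM2l; first exact: outcome_ge0.
have [hM0 _] := hM (Pm R k n m) y (@Pm01 R k n m).
rewrite mulr_sumr.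
apply: (@le_trans _ _ (\sum_(i < n | eps_optimal (Pm R k n m) (@thv R k m (2 * eps) sg) eps i)
     M (Pm R k n m) y i * \sum_(t < m) Ind R sg i t)).
  apply: ler_sum => i hi; rewrite mulrC; apply: ler_wpM2l => //.
  exact: (@epsopt_match R k n m eps sg i hm hn he hi).
rewrite [X in _ <= X](bigID (fun i => eps_optimal (Pm R k n m) (@thv R k m (2 * eps) sg) eps i)) /=.
rewrite lerDl; apply: sumr_ge0 => i _; apply: mulr_ge0 => //.
by apply: sumr_ge0 => t _; exact: Ind_ge0.
Qed.

Definition flip k (j : 'I_k.+1) (sg : {ffun 'I_k.+1 -> bool}) : {ffun 'I_k.+1 -> bool} :=
  [ffun x => if x == j then ~~ sg x else sg x].
Arguments flip {k} j sg.

Lemma flipK k (j : 'I_k.+1) : involutive (flip j).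
Proof.
move=> sg; apply/ffunP => x; rewrite !ffunE.
by case: eqP => //; rewrite negbK.
Qed.

Lemma Ind_flip (R : realType) k n m sg (i : 'I_n) (t : 'I_m) :
  @Ind R k n m (flip (gblk k t) sg) i t = 1 - @Ind R k n m sg i t.
Proof.
rewrite /Ind ffunE eqxx.
by case: (pat k i (gblk k t)); case: (sg (gblk k t)) => /=; rewrite ?subr0 ?subrr.
Qed.

Lemma pair_ineq (R : realType) (T : finType) (mu mu' A : T -> R) :
  \sum_y mu' y = 1 -> (forall y, 0 <= A y <= 1) ->
  \sum_y mu y * A y + \sum_y mu' y * (1 - A y) <= 1 + \sum_y `|mu y - mu' y|.
Proof.
move=> h1 hA.
rewrite -big_split /=.
apply: (@le_trans _ _ (\sum_y (mu' y + `|mu y - mu' y|))); last first.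
  by rewrite big_split /= h1.
apply: ler_sum => y _.
have [h0 h2] := andP (hA y).
have e : mu y * A y + mu' y * (1 - A y) = mu' y + (mu y - mu' y) * A y by ring.
rewrite e lerD2l.
apply: le_trans (ler_norm _) _.
rewrite normrM (ger0_norm h0).
by rewrite -[X in _ <= X]mulr1; apply: ler_wpM2l.
Qed.

Definition Fq (R : realType) k n m (s : R) (M : mechanism R n m) (t : 'I_m) sg : R :=
  \sum_y outcome_prob (@thv R k m s sg) y *
     \sum_(i < n) M (Pm R k n m) y i * Ind R sg i t.
Arguments Fq R {k n m} s M t sg.

Lemma stepD (R : realType) k n m (s : R) (M : mechanism R n m) (t : 'I_m) (sg : {ffun 'I_k.+1 -> bool}) :
  is_mechanism M ->
  Fq R s M t sg + Fq R s M t (flip (gblk k t) sg) <=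
  1 + \sum_y `|outcome_prob (@thv R k m s sg) y - outcome_prob (@thv R k m s (flip (gblk k t) sg)) y|.
Proof.
move=> hM.
rewrite /Fq.
set A := fun y => \sum_(i < n) M (Pm R k n m) y i * Ind R sg i t.
have eA : forall y, \sum_(i < n) M (Pm R k n m) y i * Ind R (flip (gblk k t) sg) i t = 1 - A y.
  move=> y; rewrite /A.
  under eq_bigr do rewrite Ind_flip mulrBr mulr1.
  by rewrite sumrB (hM (Pm R k n m) y (@Pm01 R k n m)).2.
under [X in _ + X <= _]eq_bigr do rewrite eA.
apply: pair_ineq; first exact: outcome_sum1.
move=> y; apply/andP; split.
  apply: sumr_ge0 => i _; apply: mulr_ge0; [exact: (hM _ y (@Pm01 R k n m)).1 | exact: Ind_ge0].
rewrite -((hM (Pm R k n m) y (@Pm01 R k n m)).2); apply: ler_sum => i _.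
rewrite -[X in _ <= X]mulr1; apply: ler_wpM2l; [exact: (hM _ y (@Pm01 R k n m)).1 | exact: Ind_le1].
Qed.

Definition rr (R : realType) (s : R) : R :=
  (1/2 + s) ^+ 2 / (1/2 - s) + (1/2 - s) ^+ 2 / (1/2 + s).
Arguments rr {R} s.

Lemma rr_bound (R : realType) (s : R) : 0 <= s -> s <= 1/8 ->
  0 <= rr s - 1 <= 32 * s ^+ 2.
Proof.
move=> h0 h1.
have hp : 0 < 1/2 - s by lra.
have hq : 0 < 1/2 + s by lra.
have hd : 0 < 1 - 4 * s ^+ 2 by rewrite expr2; nra.
have e : rr s - 1 = 16 * s ^+ 2 / (1 - 4 * s ^+ 2).
  rewrite /rr; field.
  by apply/and3P; split; rewrite gt_eqF //; lra.
rewrite e; apply/andP; split.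
  by apply: divr_ge0; [apply: mulr_ge0; [lra | exact: sqr_ge0] | lra].
rewrite ler_pdivrMr //.
have hs2 : 0 <= s ^+ 2 by exact: sqr_ge0.
have hs3 : s ^+ 2 <= 1/64 by rewrite expr2; nra.
nra.
Qed.

Lemma chi_eq (R : realType) k m (s : R) (sg : {ffun 'I_k.+1 -> bool}) (j : 'I_k.+1) :
  0 <= s -> s <= 1/8 ->
  \prod_(t < m) (@thv R k m s sg t ^+ 2 / @thv R k m s (flip j sg) t +
     (1 - @thv R k m s sg t) ^+ 2 / (1 - @thv R k m s (flip j sg) t)) =
  rr s ^+ #|[pred t : 'I_m | gblk k t == j]|.
Proof.
move=> h0 h1.
have hp : 1/2 - s != 0 by rewrite gt_eqF //; lra.
have hq : 1/2 + s != 0 by rewrite gt_eqF //; lra.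
rewrite (eq_bigr (fun t => if gblk k t == j then rr s else 1)).
  by rewrite -big_mkcond /= prodr_const.
move=> t _; rewrite /thv ffunE.
case: eqP => [->|_].
  by case: (sg j) => /=; rewrite /rr; field;
    repeat (apply/andP; split); rewrite gt_eqF //; lra.
by case: (sg (gblk k t)) => /=; field;
    repeat (apply/andP; split); rewrite gt_eqF //; lra.
Qed.

Lemma outcome_gt0 (R : realType) m (th : 'I_m -> R) y :
  (forall t, 0 < th t < 1) -> 0 < outcome_prob th y.
Proof.
move=> h; rewrite /outcome_prob; apply: prodr_gt0 => t _.
by case: (y t); move: (h t) => /andP[h0 h1] //; rewrite subr_gt0.
Qed.

Lemma stepE (R : realType) k m (eps : R) (t : 'I_m) (sg : {ffun 'I_k.+1 -> bool}) :
  0 < eps -> eps <= 1/16 ->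
  (#|[pred t' : 'I_m | gblk k t' == gblk k t]|)%:R * eps ^+ 2 <= 1/4096 ->
  \sum_y `|outcome_prob (@thv R k m (2 * eps) sg) y -
           outcome_prob (@thv R k m (2 * eps) (flip (gblk k t) sg)) y| <= 1/3.
Proof.
move=> he he1 hN.
set s := 2 * eps.
have hs0 : 0 <= s by rewrite /s; lra.
have hs1 : s <= 1/8 by rewrite /s; lra.
have pos : forall t', 0 < @thv R k m s (flip (gblk k t) sg) t' < 1.
  by move=> t'; rewrite /thv; case: ifP => _; apply/andP; split; lra.
apply: le_trans (@l1_bound R _ _ _ (fun y => @outcome_gt0 R m _ y pos)) _.
rewrite !outcome_sum1 chi_prod // chi_eq //.
set N := #|[pred t' : 'I_m | gblk k t' == gblk k t]|.
have [hx0 hx1] := andP (@rr_bound R s hs0 hs1).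
set x := rr s - 1 in hx0 hx1.
have hNx : N%:R * x <= 1/32.
  apply: le_trans (ler_wpM2l (ler0n _ N) hx1) _.
  have -> : N%:R * (32 * s ^+ 2) = 128 * (N%:R * eps ^+ 2) by rewrite /s; ring.
  lra.
have hNx2 : N%:R * x <= 1/2 by lra.
have hp := @pow_bound2 R x N hx0 hNx2.
have e : rr s = 1 + x by rewrite /x addrC subrK.
rewrite e; lra.
Qed.

Lemma stepDE (R : realType) k n m (eps : R) (M : mechanism R n m) (t : 'I_m) :
  is_mechanism M -> 0 < eps -> eps <= 1/16 ->
  (#|[pred t' : 'I_m | gblk k t' == gblk k t]|)%:R * eps ^+ 2 <= 1/4096 ->
  \sum_(sg : {ffun 'I_k.+1 -> bool}) Fq R (2 * eps) M t sg <=
  \sum_(sg : {ffun 'I_k.+1 -> bool}) (2/3 : R).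
Proof.
move=> hM he he1 hN.
set j := gblk k t.
have e : \sum_(sg : {ffun 'I_k.+1 -> bool}) Fq R (2 * eps) M t (flip j sg) =
         \sum_(sg : {ffun 'I_k.+1 -> bool}) Fq R (2 * eps) M t sg.
  rewrite [RHS](reindex_inj (can_inj (@flipK k j))) //.
have H : \sum_(sg : {ffun 'I_k.+1 -> bool})
           (Fq R (2 * eps) M t sg + Fq R (2 * eps) M t (flip j sg)) <=
         \sum_(sg : {ffun 'I_k.+1 -> bool}) (4/3 : R).
  apply: ler_sum => sg _.
  apply: le_trans (@stepD R k n m (2 * eps) M t sg hM) _.
  have := @stepE R k m eps t sg he he1 hN; lra.
rewrite big_split /= e in H.
have e2 : \sum_(sg : {ffun 'I_k.+1 -> bool}) (4/3 : R) =
          2 * \sum_(sg : {ffun 'I_k.+1 -> bool}) (2/3 : R).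
  by rewrite mulr_sumr; apply: eq_bigr => _ _; lra.
rewrite e2 in H; lra.
Qed.

Lemma stepC (R : realType) k n m (s : R) (M : mechanism R n m) sg :
  \sum_y outcome_prob (@thv R k m s sg) y *
     \sum_(i < n) M (Pm R k n m) y i * \sum_(t < m) Ind R sg i t =
  \sum_(t < m) Fq R s M t sg.
Proof.
rewrite /Fq exchange_big /=; apply: eq_bigr => y _.
rewrite -mulr_sumr; congr (_ * _).
rewrite exchange_big /=; apply: eq_bigr => i _.
by rewrite mulr_sumr.
Qed.



Lemma core (R : realType) k n m (eps : R) (M : mechanism R n m) :
  is_mechanism M -> (0 < m)%N -> (2 ^ k.+1 <= n)%N -> 0 < eps -> eps <= 1/16 ->
  (forall sg, 15/16 <= success_prob M (Pm R k n m) (@thv R k m (2 * eps) sg) eps) ->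
  (forall t : 'I_m, (#|[pred t' : 'I_m | gblk k t' == gblk k t]|)%:R * eps ^+ 2 <= 1/4096) ->
  False.
Proof.
move=> hM hm hn he he1 hs hN.
have H1 : \sum_(sg : {ffun 'I_k.+1 -> bool}) (3/4 * m%:R * (1 - 1/16) : R) <=
          \sum_(sg : {ffun 'I_k.+1 -> bool}) \sum_(t < m) Fq R (2 * eps) M t sg.
  apply: ler_sum => sg _; rewrite -(@stepC R k n m (2*eps) M sg).
  have h4 : eps <= 1/4 by lra.
  have h1 : (1/16 : R) <= 1 by lra.
  have h2 : 1 - 1/16 <= success_prob M (Pm R k n m) (@thv R k m (2 * eps) sg) eps.
    have -> : (1 - 1/16 : R) = 15/16 by lra.
    exact: hs.
  exact: (@stepB R k n m eps (1/16) M sg hM hm hn he h4 h1 h2).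
have H2 : \sum_(sg : {ffun 'I_k.+1 -> bool}) \sum_(t < m) Fq R (2 * eps) M t sg <=
          \sum_(t < m) \sum_(sg : {ffun 'I_k.+1 -> bool}) (2/3 : R).
  rewrite exchange_big /=; apply: ler_sum => t _.
  exact: (@stepDE R k n m eps M t hM he he1 (hN t)).
move: (le_trans H1 H2).
rewrite !sumr_const card_ord -[X in X <= _]mulr_natr -[X in _ <= X]mulr_natr -[X in _ <= X * _]mulr_natr.
set c := #|_|.
have hT : (0 < c)%N by apply/card_gt0P; exists [ffun => false].
have hTR : (0 : R) < c%:R by rewrite ltr0n.
have hmR : (0 : R) < m%:R by rewrite ltr0n.
set a := (c%:R : R) in hTR *; set b := (m%:R : R) in hmR *.
move=> H.
have hab : 0 < a * b by apply: mulr_gt0.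
have e1 : 3 / 4 * b * (1 - 1 / 16) * a = 45/64 * (a * b) by field.
have e2 : 2 / 3 * a * b = 2/3 * (a * b) by rewrite mulrA.
rewrite e1 e2 in H.
move: H hab; set p := a * b; clear; move=> H hab.
lra.
Qed.

Lemma block_count k m (j : 'I_k.+1) :
  (#|[pred t : 'I_m | gblk k t == j]| * k.+1 <= m + k.+1)%N.
Proof.
set A := [pred t : 'I_m | gblk k t == j].
pose f := fun t : 'I_m => (inord (t %/ k.+1) : 'I_(m %/ k.+1).+1).
have hf : {in A &, injective f}.
  move=> t1 t2; rewrite !inE => /eqP h1 /eqP h2 e.
  have l1 : (t1 %/ k.+1 < (m %/ k.+1).+1)%N by rewrite ltnS leq_div2r // ltnW.
  have l2 : (t2 %/ k.+1 < (m %/ k.+1).+1)%N by rewrite ltnS leq_div2r // ltnW.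
  have e' : (t1 %/ k.+1 = t2 %/ k.+1)%N.
    by move: (congr1 val e); rewrite /f /= !inordK.
  have m1 : (t1 %% k.+1 = t2 %% k.+1)%N.
    by move: (congr1 val h1) (congr1 val h2) => /= -> ->.
  by apply: val_inj; rewrite /= (div.divn_eq t1 k.+1) (div.divn_eq t2 k.+1) e' m1.
have hc : #|A| = #|[set f x | x in A]| by rewrite card_in_imset.
have hle : (#|A| <= (m %/ k.+1).+1)%N.
  by rewrite hc; apply: leq_trans (max_card _) _; rewrite card_ord.
apply: leq_trans (leq_mul hle (leqnn k.+1)) _.
by rewrite mulSn addnC leq_add2r leq_divM.
Qed.

Lemma ln_bound (R : realType) (n K : nat) : (0 < n)%N -> (n < 2 ^ K.+1)%N ->
  ln (n%:R : R) <= K.+1%:R.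
Proof.
move=> hn hK.
have h2 : (0 : R) < 2 by [].
have hl : ln (n%:R : R) <= ln ((2 : R) ^+ K.+1).
  have hp : 0 < (2:R) ^+ K.+1 by apply: exprn_gt0.
  rewrite ler_ln ?posrE ?ltr0n ?hp //.
  by rewrite -natrX ler_nat ltnW.
apply: le_trans hl _.
rewrite lnXn // -[X in X <= _]mulr_natr.
have hln2 : ln (2 : R) <= 1.
  have h := expR_ge1Dx (1 : R).
  rewrite -[X in _ <= X](expRK 1) ler_ln ?posrE ?expR_gt0 //; lra.
have h0 : 0 <= ln (2 : R) by apply: ln_ge0; lra.
have hK1 : (0:R) <= K.+1%:R by [].
nra.
Qed.

Lemma final_arith (R : realType) (N k' m e2 L : R) : 0 <= N -> 0 < e2 -> e2 <= 1/16384 ->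
  1 <= k' -> L <= k' + 1 -> m * e2 < 1/16384 * L -> N * k' <= m + k' ->
  N * e2 <= 1/4096.
Proof.
move=> hN he2 he2b hk hL hlt hb.
have h1 : N * k' * e2 <= (m + k') * e2 by apply: ler_wpM2r => //; lra.
have h3 : k' * e2 <= k' * (1/16384) by apply: ler_wpM2l => //; lra.
have h4 : (N * e2) * k' <= (3/16384) * k'.
  have -> : N * e2 * k' = N * k' * e2 by rewrite mulrAC.
  rewrite mulrDl in h1.
  lra.
have hk0 : 0 < k' by lra.
rewrite ler_pM2r // in h4.
lra.
Qed.

Theorem mainTheorem11 (R : realType) :
  exists (C delta0 eps0 : R),
    0 < C /\ 0 < delta0 < 1 / 8 /\ 0 < eps0 /\
    forall (n m : nat), (2 <= n)%N -> (1 <= m)%N ->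
    forall eps : R, 0 < eps < eps0 ->
    forall M : mechanism R n m, is_mechanism M ->
    (forall (P : 'M[R]_(n, m)) (theta : 'I_m -> R),
        matrix01 P -> vec01 theta ->
        1 - delta0 <= success_prob M P theta eps) ->
    C * ln (n%:R) / eps ^+ 2 <= m%:R.
Proof.
exists (1/16384), (1/16), (1/128).
split; first lra.
split; first (apply/andP; split; lra).
split; first lra.
move=> n m hn hm eps /andP[he he0] M hM hyp.
set K := trunc_log 2 n.
have hK0 : (0 < K)%N.
  rewrite /K; case E: (trunc_log 2 n) => //.
  have := trunc_log_ltn n (isT : (1 < 2)%N); rewrite E expn1 => h.
  by move: hn; rewrite leqNgt h.
have hnpos : (0 < n)%N by apply: leq_trans hn.
have hKn : (2 ^ K <= n)%N by apply: trunc_logP.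
have hKlt : (n < 2 ^ K.+1)%N by apply: trunc_log_ltn.
have hKe : K = (K.-1).+1 by rewrite prednK.
rewrite leNgt; apply/negP => hlt.
have he2 : 0 < eps ^+ 2 by apply: exprn_gt0.
move: hlt; rewrite ltr_pdivlMr // => hlt.
have hln := @ln_bound R n K hnpos hKlt.
apply: (@core R K.-1 n m eps M hM hm _ he _ _ _).
- by rewrite -hKe.
- lra.
- move=> sg.
  have -> : (15/16 : R) = 1 - 1/16 by lra.
  apply: hyp; first exact: Pm01.
  by apply: thv01; apply/andP; split; lra.
- move=> t.
  have hb := @block_count K.-1 m (gblk K.-1 t).
  rewrite hKe in hln.
  set N := #|_| in hb *.
  have hbR : (N%:R : R) * (K.-1.+1)%:R <= m%:R + (K.-1.+1)%:R by rewrite -natrM -natrD ler_nat.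
  have hKR : (1 : R) <= (K.-1.+1)%:R by rewrite ler1n.
  have hKR1 : ((K.-1.+1).+1%:R : R) = (K.-1.+1)%:R + 1 by rewrite -natr1.
  rewrite hKR1 in hln.
  have hNn : (0 : R) <= N%:R by [].
  set e2 := eps ^+ 2 in he2 hlt *.
  have he2b : e2 <= 1/16384 by rewrite /e2 expr2; nra.
  have hl0 : 0 <= ln (n%:R : R) by apply: ln_ge0; rewrite ler1n; apply: leq_trans hn.
  set L := ln (n%:R : R) in hln hlt hl0.
  set k' := ((K.-1.+1)%:R : R) in hbR hKR hln.
  exact: (@final_arith R _ _ _ _ _ hNn he2 he2b hKR hln hlt hbR).
Qed.
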